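(* Let $\mathcal{M}$ be a separable metric space, $f:\mathcal{M}\to\mathcal{M}$ continuous, and $\mathcal{X}\subseteq\mathcal{M}$ forward invariant under $f$ and path connected, with $\mathcal{W}$ the set of $\omega$-limit sets of $x_{k+1}=f(x_k)$ on $\mathcal{X}$. Suppose every trajectory on $\mathcal{X}$ is forward precompact in $\mathcal{X}$ and $\mathcal{W}$ is countable. If $\mathcal{W}$ has more than one element, then there do not exist a separable metric space $\mathcal{Z}$, a continuous $g:\mathcal{Z}\to\mathcal{Z}$ such that $z_{k+1}=g(z_k)$ has closed basins, and a continuous one-to-one map $F:\mathcal{X}\to\mathcal{Z}$ with $F\circ f=g\circ F$ on $\mathcal{X}$.
   Context: Forward orbit of $\xi$: $\{f^k(\xi)\mid k\in\mathbb{N}\}$; forward precompact in $\mathcal{X}$ means its closure in $\mathcal{X}$ is compact. $\omega_{\mathcal{X}}(\xi)$ is the set of $x\in\mathcal{X}$ with $f^{k_j}(\xi)\to x$ for some $k_j\to\infty$; $\mathcal{W}=\{\omega_{\mathcal{X}}(\xi)\mid\xi\in\mathcal{X}\}$. For $g$ on $\mathcal{Z}$, $\omega$-limit sets are defined analogously; domain of attraction $D^+_{\mathcal{Z}}(\Omega)=\{\zeta\in\mathcal{Z}\mid\omega_{\mathcal{Z}}(\zeta)=\Omega\}$; closed basins means every such domain of attraction is closed. *)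

(* Defs.v *)
From HB Require Import structures.
From mathcomp Require Import all_boot all_order all_algebra.
From mathcomp Require Import all_classical all_reals all_analysis.
Set Implicit Arguments. Unset Strict Implicit. Unset Printing Implicit Defensive.
Import Order.TTheory GRing.Theory Num.Theory.
Local Open Scope classical_set_scope.
Local Open Scope ring_scope.

Definition separable (T : topologicalType) : Prop :=
  exists2 D : set T, countable D & dense D.

Definition path_connected_set (R : realType) (T : topologicalType) (X : set T) : Prop :=
  forall x y, X x -> X y ->
    exists p : R -> T,
      [/\ {within `[0, 1], continuous p}, p 0 = x, p 1 = y & p @` `[0, 1] `<=` X].

Definition forward_invariant (T : Type) (f : T -> T) (X : set T) : Prop :=
  f @` X `<=` X.

Definition forward_orbit (T : Type) (f : T -> T) (xi : T) : set T :=
  [set iter k f xi | k in [set: nat]].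

(* Forward precompact in X: the closure in X (relative closure, i.e.
   closure of the orbit intersected with X) is compact. *)
Definition forward_precompact_in (T : topologicalType) (f : T -> T) (X : set T) (xi : T) : Prop :=
  compact (closure (forward_orbit f xi) `&` X).

Definition omega_limit (T : topologicalType) (f : T -> T) (X : set T) (xi : T) : set T :=
  [set x | X x /\ exists k : nat -> nat,
      (forall N : nat, \forall j \near \oo, (N <= k j)%N) /\
      (fun j => iter (k j) f xi) @ \oo --> x].

Definition omega_limit_sets (T : topologicalType) (f : T -> T) (X : set T) : set (set T) :=
  [set omega_limit f X xi | xi in X].

Definition domain_of_attraction (T : topologicalType) (g : T -> T) (Omega : set T) : set T :=
  [set z | omega_limit g setT z = Omega].

Definition closed_basins (T : topologicalType) (g : T -> T) : Prop :=
  forall zeta : T, closed (domain_of_attraction g (omega_limit g setT zeta)).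

(* Main.v *)
Require Import Defs.
From HB Require Import structures.
From mathcomp Require Import all_boot all_order all_algebra.
From mathcomp Require Import all_classical all_reals all_analysis.
From mathcomp Require Import lra.
Import Order.TTheory GRing.Theory Num.Theory.
Local Open Scope classical_set_scope.
Local Open Scope ring_scope.
Import numFieldNormedType.Exports.
Lemma closed_sup_mem (R : realType) (A : set R) : A !=set0 -> closed A -> has_ubound A -> A (sup A).
Proof.
move=> A0 cA lA; rewrite [X in X (sup A)](@closure_id R A).1 //; exact: closure_sup.
Qed.
Lemma closed_inf_mem (R : realType) (A : set R) : A !=set0 -> closed A -> has_lbound A -> A (inf A).
Proof.
move=> [a Aa] cA [l lA].
have : [set - x | x in A] (sup [set - x | x in A]).
  apply: closed_sup_mem; first by exists (-a), a.
    exact: closedN.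
  exists (- l) => _ [x Ax <-]; rewrite lerN2; exact: lA.
case=> x Ax e; rewrite /inf -e opprK //.
Qed.

Section Sier.
Variables (R : realType) (c : R -> nat).
Hypothesis hE : forall n, closed [set t : R | 0 <= t <= 1 /\ c t = n].

Lemma closed_seg (a b : R) n : closed ([set t : R | 0 <= t <= 1 /\ c t = n] `&` [set t | a <= t <= b]).
Proof.
apply: closedI => //.
have -> : [set t : R | a <= t <= b] = [set` (`[a, b])] by apply/seteqP; split => t /=; rewrite in_itv.
exact: itv_closed.
Qed.

Lemma sierL (a b : R) : 0 <= a -> a < b -> b <= 1 -> c a <> c b ->
  exists d e, [/\ a <= d, d < e, e <= b, c d = c a /\ c e = c b &
    (forall y, d < y < e -> c y <> c a /\ c y <> c b)].
Proof.
move=> a0 ab b1 cab.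
set Sb := [set t : R | 0 <= t <= 1 /\ c t = c b] `&` [set t | a <= t <= b].
have : Sb (inf Sb).
  apply: closed_inf_mem; last by exists a => t [_ /andP[]].
    by exists b; split; first split; try done; apply/andP; split; lra.
  exact: closed_seg.
set e := inf Sb => -[[/andP[e0 e1] ceb] /andP[ae eb]].
have ltae : a < e by rewrite lt_neqAle ae andbT; apply/eqP => E; apply: cab; rewrite E ceb.
set Sa := [set t : R | 0 <= t <= 1 /\ c t = c a] `&` [set t | a <= t <= e].
have : Sa (sup Sa).
  apply: closed_sup_mem; last by exists e => t [_ /andP[]].
    by exists a; split; first split; try done; apply/andP; split; lra.
  exact: closed_seg.
set d := sup Sa => -[[/andP[d0 d1] cda] /andP[ad de]].
have ltde : d < e by rewrite lt_neqAle de andbT; apply/eqP => E; apply: cab; rewrite -cda E ceb.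
exists d, e; split => // y /andP[dy ye]; split => E.
  have : Sa y by split; first split; try done; apply/andP; split; lra.
  move=> Sy; have : y <= d.
    by apply: (sup_upper_bound (E:=Sa)) => //; split; [exists y|exists e => t [_ /andP[]]].
  by rewrite leNgt dy.
have : Sb y by split; first split; try done; apply/andP; split; lra.
move=> Sy; have : e <= y.
  by apply: (ge_inf (E:=Sb)) => //; exists a => t [_ /andP[]].
by rewrite leNgt ye.
Qed.


Lemma sierS (n : nat) (a b : R) : 0 <= a -> a < b -> b <= 1 -> c a <> c b ->
  exists a' b', [/\ a <= a', a' < b', b' <= b, c a' <> c b' &
    (forall y, a' <= y <= b' -> c y <> n)].
Proof.
move=> a0 ab b1 cab.
have [[t /andP[a_t tb] ctn]|Nt] := pselect (exists2 t, a <= t <= b & c t = n); last first.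
  exists a, b; split => // y yab cyn; apply: Nt; by exists y.
have [can|can] := eqVneq (c a) n.
  have [d [e [ad de eb [cda ceb] H]]] := @sierL _ _ a0 ab b1 cab.
  set x := (d + e) / 2.
  have dx : d < x by rewrite /x; lra.
  have xe : x < e by rewrite /x; lra.
  have [Hxa Hxb] := H x ltac:(by apply/andP).
  exists x, e; split => //; first lra.
    by rewrite ceb.
  move=> y /andP[xy ye]; have [->|yne] := eqVneq y e.
    by rewrite ceb -can => /esym.
  have ye' : y < e by rewrite lt_neqAle yne.
  have [Hya _] := H y ltac:(apply/andP; split => //; lra).
  by rewrite -can.
have ltat : a < t.
  rewrite lt_neqAle a_t andbT; apply/eqP => E; by move: can; rewrite E ctn eqxx.
have t1 : t <= 1 by lra.
have [d [e [ad de et [cda cet] H]]] := @sierL _ _ a0 ltat t1 ltac:(by rewrite ctn; apply/eqP).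
set x := (d + e) / 2.
have dx : d < x by rewrite /x; lra.
have xe : x < e by rewrite /x; lra.
have [Hxa Hxb] := H x ltac:(by apply/andP).
exists d, x; split => //; first lra.
  by rewrite cda => /esym.
move=> y /andP[dy yx]; have [<-|yne] := eqVneq d y.
  by rewrite cda; apply/eqP.
have dy' : d < y by rewrite lt_neqAle yne.
have [_ Hyb] := H y ltac:(apply/andP; split => //; lra).
by rewrite -ctn.
Qed.

Lemma sierpinski : c 0 <> c 1 -> False.
Proof.
move=> c01.
pose P (ab : R * R) := [/\ 0 <= ab.1, ab.1 < ab.2, ab.2 <= 1 & c ab.1 <> c ab.2].
have : forall nab : nat * (R * R), exists ab' : R * R, P nab.2 ->
   P ab' /\ [/\ nab.2.1 <= ab'.1, ab'.2 <= nab.2.2 &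
    (forall y, ab'.1 <= y <= ab'.2 -> c y <> nab.1)].
  move=> [n [a b]]; have [[a0 ab b1 cab]|NP] := pselect (P (a, b)); last first.
    by exists (0, 0) => /NP.
  have [a' [b' [aa' ab' bb' cab' H]]] := @sierS n _ _ a0 ab b1 cab.
  exists (a', b') => _; split => //; split => //=; lra.
move=> /choice [s Hs].
pose u := fix u n := if n is m.+1 then s (m, u m) else (0 : R, 1 : R).
have Pu : forall n, P (u n).
  elim=> [|n IH]; first by split => //=; lra.
  by have [] := Hs (n, u n) IH.
have Qu : forall n, [/\ (u n).1 <= (u n.+1).1, (u n.+1).2 <= (u n).2 &
    (forall y, (u n.+1).1 <= y <= (u n.+1).2 -> c y <> n)].
  by move=> n; have [] := Hs (n, u n) (Pu n).
have mono : forall m k, (m <= k)%N -> (u m).1 <= (u k).1 /\ (u k).2 <= (u m).2.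
  move=> m; elim=> [|k IH]; first by rewrite leqn0 => /eqP ->; rewrite !lexx.
  rewrite leq_eqVlt => /orP[/eqP ->|]; first by rewrite !lexx.
  rewrite ltnS => /IH [h1 h2]; have [q1 q2 _] := Qu k; split; lra.
have nest : forall m k, (u m).1 <= (u k).2.
  move=> m k; have [mk|km] := leqP m k.
    have [h1 _] := mono _ _ mk; have [_ h2 _ _] := Pu k; lra.
  have [_ h2] := mono _ _ (ltnW km); have [_ h1 _ _] := Pu m; lra.
set A := [set (u n).1 | n in [set: nat]].
have supA : has_sup A by split; [exists (u 0%N).1, 0%N | exists (u 0%N).2 => _ [n _ <-]].
set y := sup A.
have lo : forall n, (u n).1 <= y by move=> n; apply: sup_upper_bound => //; exists n.
have hi : forall n, y <= (u n).2.
  by move=> n; apply: ge_sup; [exists (u 0%N).1, 0%N | move=> _ [m _ <-]].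
have [_ _ Hy] := Qu (c y).
by apply: (Hy y) => //; apply/andP; split.
Qed.

End Sier.
Section Dyn.
Variables (R : realType) (M Z : metricType R) (f : M -> M) (g : Z -> Z) (F : M -> Z) (X : set M).
Hypotheses (finv : forward_invariant f X) (Fc : {within X, continuous F})
  (Finj : {in X &, injective F}) (Fconj : forall x, X x -> F (f x) = g (F x))
  (pc : forall xi, X xi -> forward_precompact_in f X xi).

Lemma iter_X xi k : X xi -> X (iter k f xi).
Proof. move=> Xxi; elim: k => [//|k IH] /=; apply: finv; by exists (iter k f xi). Qed.

Lemma iter_F xi k : X xi -> F (iter k f xi) = iter k g (F xi).
Proof. move=> Xxi; elim: k => [//|k IH] /=; by rewrite Fconj ?IH //; exact: iter_X. Qed.

Lemma seqF (s : nat -> M) x : (forall j, X (s j)) -> X x -> s @ \oo --> x ->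
  (F \o s) @ \oo --> F x.
Proof.
move=> sX Xx sx.
have H : F @ within X (nbhs x) --> F x.
  by move: Fc => /subspace_continuousP; apply.
idtac.
have Hs : s @ \oo --> within X (nbhs x).
  move=> U WU; have Hw : \forall j \near \oo, X (s j) -> U (s j) := sx _ WU.
  exact: (filterS (fun j (h : X (s j) -> U (s j)) => h (sX j)) Hw).
exact: cvg_trans (cvg_app F Hs) H.
Qed.

Lemma omegaZ xi : X xi -> omega_limit g setT (F xi) = F @` omega_limit f X xi.
Proof.
move=> Xxi; apply/seteqP; split; last first.
  move=> _ [x [Xx [k [hk hx]]] <-]; split => //; exists k; split => //.
  have -> : (fun j => iter (k j) g (F xi)) = F \o (fun j => iter (k j) f xi).
    by apply/funext => j /=; rewrite iter_F.
  apply: seqF => // j; exact: iter_X.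
move=> z [_ [k [hk hz]]].
set s := fun j => iter (k j) f xi.
have {}hz : (F \o s) @ \oo --> z.
  have <- : (fun j => iter (k j) g (F xi)) = F \o s.
    by apply/funext => j /=; rewrite /s iter_F.
  exact: hz.
have Ks : forall j, (closure (forward_orbit f xi) `&` X) (s j).
  move=> j; split; [apply: subset_closure; by exists (k j) | exact: iter_X].
have [x [Kx clx]] := pc xi Xxi (s @ \oo) _ (@filterE nat \oo _ _ Ks).
have : forall n : nat, exists j, (n <= j)%N /\ ball x (n.+1%:R^-1) (s j).
  move=> n.
  have : [set s j | j in [set j | (n <= j)%N]] `&` ball x n.+1%:R^-1 !=set0.
    apply: clx; first by exists n => // j /= nj; exists j.
    by apply: nbhsx_ballx; rewrite invr_gt0.
  by move=> [y [[j nj <-] bj]]; exists j.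
move=> /choice [phi hphi].
have phioo : phi @ \oo --> \oo.
  move=> P [N _ HN]; exists N => // n /= Nn; apply: HN => /=.
  exact: leq_trans Nn (hphi n).1.
have sx : (s \o phi) @ \oo --> x.
  apply/cvg_ballP => eps eps0.
  have := near_infty_natSinv_lt (PosNum eps0); apply: filterS => n /= lt.
  apply: (le_ball (ltW lt)); exact: (hphi n).2.
exists x.
  split; first exact: Kx.2.
  exists (k \o phi); split => //.
  move=> N; have [J _ HJ] := hk N; exists J => // n /= Jn; apply: HJ => /=.
  exact: leq_trans Jn (hphi n).1.
have h1 : (F \o (s \o phi)) @ \oo --> F x.
  apply: seqF => //; [move=> j; exact: iter_X | exact: Kx.2].
have h2 : (F \o s) \o phi @ \oo --> z by apply: cvg_comp phioo hz.
exact: (@cvg_unique Z (@metric_hausdorff _ Z) _ _ _ _ h1 h2).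
Qed.


Lemma image_inj (A B : set M) : A `<=` X -> B `<=` X -> F @` A = F @` B -> A = B.
Proof.
move=> AX BX E; apply/seteqP; split => x Ax.
  have : (F @` B) (F x) by rewrite -E; exists x.
  case=> y By Fyx; have -> : x = y.
    by apply: Finj; rewrite ?in_setE //; [exact: AX | exact: BX].
  done.
have : (F @` A) (F x) by rewrite E; exists x.
case=> y Ay Fyx; have -> : x = y.
  by apply: Finj; rewrite ?in_setE //; [exact: BX | exact: AX].
done.
Qed.

Lemma omega_sub xi : omega_limit f X xi `<=` X.
Proof. by move=> x []. Qed.

Lemma basin_closed (p : R -> M) (pc01 : {within `[0, 1], continuous p})
  (pX : p @` `[0, 1] `<=` X) xi0 (Xxi0 : X xi0) (cb : closed_basins g) :
  closed [set t : R | 0 <= t <= 1 /\ omega_limit f X (p t) = omega_limit f X xi0].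
Proof.
set S := [set t : R | 0 <= t <= 1 /\ omega_limit f X (p t) = omega_limit f X xi0].
move=> t clt.
have SI : S `<=` [set` `[0, 1]] by move=> s [s01 _]; rewrite /= in_itv.
have t01 : 0 <= t <= 1.
  have cI : closed ([set x : R | 0 <= x] `&` [set x : R | x <= 1]).
    by apply: closedI; [exact: closed_ge|exact: closed_le].
  have [h0 h1] : ([set x : R | 0 <= x] `&` [set x : R | x <= 1]) t.
    by apply: cI; apply: closure_subset clt => s [/andP[]].
  by apply/andP.
have It : [set` `[0, 1]] t by rewrite /= in_itv.
have pXt : forall s, [set` `[0, 1]] s -> X (p s) by move=> s Is; apply: pX; exists s.
set D := domain_of_attraction g (omega_limit g setT (F xi0)).
suff Dt : D (F (p t)).
  split => //; apply: image_inj; [exact: omega_sub|exact: omega_sub|].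
  by rewrite -!omegaZ //; exact: pXt.
have PF : ProperFilter (within S (nbhs t)) by apply: within_nbhs_proper.
apply: (closed_cvg D (cb (F xi0))); last first.
  have hp : p @ within [set` `[0, 1]] (nbhs t) --> p t.
    by move: pc01 => /subspace_continuousP; apply.
  have HF : F @ within X (nbhs (p t)) --> F (p t).
    by move: Fc => /subspace_continuousP; apply; exact: pXt.
  have hpS : p @ within S (nbhs t) --> within X (nbhs (p t)).
    move=> U WU.
    have Hw : \forall y \near nbhs t, [set` `[0, 1]] y -> X (p y) -> U (p y) := hp _ WU.
    apply: (filterS _ Hw) => y h Sy; apply: h; [exact: SI|exact/pXt/SI].
  exact: cvg_trans (cvg_app F hpS) HF.
apply: (filterE (F := nbhs t)) => y Sy; rewrite /D /domain_of_attraction /=.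
rewrite !omegaZ //; [by case: Sy => _ -> | exact/pXt/SI].
exact: fmap_proper_filter.
Qed.

End Dyn.

Theorem corollary22 (R : realType) (M : metricType R) (f : M -> M) (X : set M) :
  separable M ->
  continuous f ->
  forward_invariant f X ->
  path_connected_set R X ->
  (forall xi, X xi -> forward_precompact_in f X xi) ->
  countable (omega_limit_sets f X) ->
  (exists W1 W2, omega_limit_sets f X W1 /\ omega_limit_sets f X W2 /\ W1 <> W2) ->
  ~ exists (Z : metricType R) (g : Z -> Z) (F : M -> Z),
      separable Z /\ continuous g /\ closed_basins g /\
      {within X, continuous F} /\ {in X &, injective F} /\
      (forall x, X x -> F (f x) = g (F x)).
Proof.
move=> _ _ finv pcX pc cW [W1 [W2 [[x1 X1 <-] [[x2 X2 <-] neq]]]].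
move=> [Z [g [F [_ [_ [cb [Fc [Finj Fconj]]]]]]]].
have [p [pc01 p0 p1 pX]] := pcX x1 x2 X1 X2.
have pXt : forall s, 0 <= s <= 1 -> X (p s).
  by move=> s s01; apply: pX; exists s => //; rewrite /= in_itv.
move/countable_injP: cW => [idx idxinj].
pose c t := idx (omega_limit f X (p t)).
have cE : forall s t, 0 <= s <= 1 -> 0 <= t <= 1 -> c s = c t ->
    omega_limit f X (p s) = omega_limit f X (p t).
  move=> s t s01 t01 cst; apply: idxinj => //; rewrite inE.
    by exists (p s) => //; exact: pXt.
  by exists (p t) => //; exact: pXt.
apply: (@sierpinski R c).
  move=> n; have [[t0 [t01 ct0]]|Nt] := pselect (exists t, 0 <= t <= 1 /\ c t = n).
    have HB := @basin_closed _ _ _ _ _ _ _ finv Fc Finj Fconj pc p pc01 pX (p t0) (pXt t0 t01) cb.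
    have E : [set t : R | 0 <= t <= 1 /\ omega_limit f X (p t) = omega_limit f X (p t0)] =
        [set t : R | 0 <= t <= 1 /\ c t = n].
      apply/seteqP; split => t [t01' h]; split => //.
        by rewrite /c h.
      by apply: cE => //; rewrite h ct0.
    exact: (eq_ind _ closed HB _ E).
  have E : set0 = [set t : R | 0 <= t <= 1 /\ c t = n].
    by apply/seteqP; split => t // ht; apply: Nt; exists t.
  exact: (eq_ind _ closed closed0 _ E).
move=> c01; apply: neq; rewrite -p0 -p1; apply: cE => //; apply/andP; split; lra.
Qed.
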